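(* Let $\beta\in(0,1/e)$, $\Phi$ as in the context, and $\varepsilon(x)=1/\log\Phi(x)$. Then for every $x>0$, $$\sum_{k=1}^{\infty}\varepsilon\left(E^k(x)\right)=\infty.$$
   Context: $E(x)=e^x$ and $E^k$ is its $k$-th iterate. For $\beta\in(0,1/e)$ let $E_\beta(z)=e^{\beta z}$; it has a repelling real fixed point $\xi>0$ with multiplier $\lambda=\beta\xi>1$. $\Phi$ is the unique local holomorphic solution of $\Phi(E_\beta(z))=\lambda\Phi(z)$ near $\xi$ with $\Phi(\xi)=0$, $\Phi'(\xi)=1$, extended to $[\xi,\infty)$ so that the equation holds there; it is increasing and tends to $\infty$. *)

(* Defs.v *)
From Stdlib Require Import Reals.
From Coquelicot Require Import Coquelicot.
Open Scope R_scope.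

Definition E_beta (beta z : R) : R := exp (beta * z).

Definition eps (Phi : R -> R) (x : R) : R := / ln (Phi x).

(* Hypotheses characterising Phi, the Koenigs-type linearizer of E_beta at its
   repelling fixed point xi with multiplier lam = beta * xi:
   - Phi is real-analytic (a convergent power series) on a neighbourhood
     ]xi - r, xi + r[ of xi (restriction of the local holomorphic solution);
   - the functional equation Phi(E_beta x) = lam * Phi x holds on that
     neighbourhood and on [xi, +oo) (i.e. for all x > xi - r);
   - Phi xi = 0 and Phi'(xi) = 1. *)
Definition is_Phi (beta xi : R) (Phi : R -> R) : Prop :=
  (exists (r : R) (a : nat -> R), 0 < r /\
     (forall x, Rabs (x - xi) < r -> is_pseries a (x - xi) (Phi x)) /\
     (forall x, xi - r < x -> Phi (E_beta beta x) = (beta * xi) * Phi x)) /\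
  Phi xi = 0 /\ is_derive Phi xi 1.

(* Main.v *)
Require Import Defs.
From Stdlib Require Import Reals Lra Lia Arith.
From Coquelicot Require Import Coquelicot.
Open Scope R_scope.

Lemma Eb_lin beta xi y : 0 < xi -> E_beta beta xi = xi ->
  E_beta beta y - xi >= beta*xi*(y-xi).
Proof. intros Hx Hf. unfold E_beta in *.
  replace (beta*y) with (beta*xi + beta*(y-xi)) by ring. rewrite exp_plus, Hf.
  pose proof (exp_ineq1_le (beta*(y-xi))). nra. Qed.

Lemma Eb_lt beta y y' : 0 < beta -> y < y' -> E_beta beta y < E_beta beta y'.
Proof. intros. unfold E_beta. apply exp_increasing. nra. Qed.

Lemma Eb_le beta y y' : 0 < beta -> y <= y' -> E_beta beta y <= E_beta beta y'.
Proof. intros Hb [H|H]. left; apply Eb_lt; auto. subst; lra. Qed.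

Lemma iter_le beta m z z' : 0 < beta -> z <= z' ->
  Nat.iter m (E_beta beta) z <= Nat.iter m (E_beta beta) z'.
Proof. intros. induction m; simpl; auto using Eb_le. Qed.

Lemma iter_gt beta xi m z : 0 < xi -> E_beta beta xi = xi -> 1 < beta * xi ->
  xi < z -> xi < Nat.iter m (E_beta beta) z.
Proof. intros. induction m; simpl; auto.
  pose proof (Eb_lin beta xi (Nat.iter m (E_beta beta) z) H H0). nra. Qed.

Lemma iter_FE beta xi r (Phi : R -> R) m z : 0 < xi -> E_beta beta xi = xi -> 1 < beta * xi ->
  0 < r -> (forall x, xi - r < x -> Phi (E_beta beta x) = (beta * xi) * Phi x) ->
  xi < z -> Phi (Nat.iter m (E_beta beta) z) = (beta*xi)^m * Phi z.
Proof. intros. induction m; simpl. ring.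
  rewrite H3. rewrite IHm. ring.
  pose proof (iter_gt beta xi m z H H0 H1 H4). lra. Qed.

Lemma s_lin beta xi a n : 0 < xi -> E_beta beta xi = xi -> 1 < beta * xi -> xi < a ->
  Nat.iter n (E_beta beta) a >= a + INR n * (beta*xi-1)*(a-xi).
Proof. intros. induction n. simpl; lra.
  rewrite S_INR. simpl.
  pose proof (Eb_lin beta xi (Nat.iter n (E_beta beta) a) H H0).
  assert (INR n >= 0) by (apply Rle_ge, pos_INR).
  assert (INR n * (beta*xi-1) >= 0) by nra.
  assert (INR n * (beta*xi-1)*(a-xi) >= 0) by nra.
  assert (Nat.iter n (E_beta beta) a - xi >= a - xi) by nra.
  assert ((beta*xi - 1) * (Nat.iter n (E_beta beta) a - xi) >= (beta*xi-1)*(a - xi)) by nra.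
  nra. Qed.

Lemma s_succ beta xi a n : 0 < xi -> E_beta beta xi = xi -> 1 < beta * xi -> xi < a ->
  Nat.iter n (E_beta beta) a < Nat.iter (S n) (E_beta beta) a.
Proof. intros. simpl. pose proof (iter_gt beta xi n a H H0 H1 H2).
  pose proof (Eb_lin beta xi (Nat.iter n (E_beta beta) a) H H0). nra. Qed.

Lemma s_lt beta xi a i j : 0 < xi -> E_beta beta xi = xi -> 1 < beta * xi -> xi < a ->
  Nat.iter i (E_beta beta) a < Nat.iter (i + S j) (E_beta beta) a.
Proof. intros. induction j.
  - rewrite Nat.add_1_r. apply (s_succ beta xi); auto.
  - rewrite Nat.add_succ_r. eapply Rlt_trans. apply IHj. apply (s_succ beta xi); auto. Qed.

Lemma decomp beta a : 0 < beta -> forall n y, a <= y <= Nat.iter (S n) (E_beta beta) a ->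
  exists m z, (m <= n)%nat /\ a <= z <= E_beta beta a /\ y = Nat.iter m (E_beta beta) z.
Proof. intros Hb n. induction n; intros y Hy.
  - exists 0%nat, y. simpl in *. split; [lia|split; lra].
  - destruct (Rle_lt_dec y (E_beta beta a)).
    + exists 0%nat, y. split; [lia|split; simpl; lra].
    + assert (Hy0 : 0 < y). { assert (0 < E_beta beta a) by (unfold E_beta; apply exp_pos). lra. }
      set (y' := ln y / beta).
      assert (Ey : E_beta beta y' = y).
      { unfold E_beta, y'. replace (beta * (ln y / beta)) with (ln y) by (field; lra).
        apply exp_ln; auto. }
      assert (Ha : a <= y').
      { destruct (Rle_lt_dec a y'); auto. pose proof (Eb_lt beta y' a Hb r0). lra. }
      assert (Hu : y' <= Nat.iter (S n) (E_beta beta) a).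
      { destruct (Rle_lt_dec y' (Nat.iter (S n) (E_beta beta) a)); auto.
        pose proof (Eb_lt beta _ _ Hb r0). rewrite Ey in H.
        change (Nat.iter (S (S n)) (E_beta beta) a) with
          (E_beta beta (Nat.iter (S n) (E_beta beta) a)) in Hy. lra. }
      destruct (IHn y' (conj Ha Hu)) as [m [z [Hm [Hz Hyz]]]].
      exists (S m), z. split; [lia|split; auto]. simpl. rewrite <- Hyz. auto.
Qed.

Lemma m_lower beta xi a N m z : 0 < beta -> 0 < xi -> E_beta beta xi = xi -> 1 < beta * xi -> xi < a ->
  z <= E_beta beta a -> Nat.iter N (E_beta beta) a <= Nat.iter m (E_beta beta) z ->
  (N <= S m)%nat.
Proof. intros. destruct (le_lt_dec N (S m)); auto. exfalso.
  pose proof (iter_le beta m _ _ H H4). rewrite <- Nat.iter_succ_r in H6.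
  destruct (Nat.le_exists_sub (S (S m)) N l) as [j [Hj _]].
  replace N with (S m + S j)%nat in H5 by lia.
  pose proof (s_lt beta xi a (S m) j H0 H1 H2 H3). lra. Qed.

Lemma bern l m : 1 <= l -> l ^ m >= 1 + INR m * (l - 1).
Proof. intros. induction m. simpl; lra. rewrite S_INR. simpl.
  assert (INR m >= 0) by (apply Rle_ge, pos_INR).
  assert (INR m * (l-1) * (l-1) >= 0) by (apply Rle_ge; apply Rmult_le_pos; [apply Rmult_le_pos|]; lra).
  nra. Qed.

Lemma growth beta y : 0 < beta -> 4 / beta^3 <= y ->
  exp y <= E_beta beta (E_beta beta y).
Proof. intros Hb Hy. unfold E_beta.
  assert (Hy0 : 0 < y). { assert (0 < 4 / beta^3) by (apply Rdiv_lt_0_compat; [lra| apply pow_lt; lra]). lra. }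
  assert (H4 : 4 <= beta^3 * y).
  { apply (Rmult_le_compat_l (beta^3)) in Hy; [|left; apply pow_lt; lra].
    replace (beta^3 * (4/beta^3)) with 4 in Hy by (field; lra). lra. }
  assert (y <= beta * exp (beta * y)).
  { replace (beta*y) with (beta*y/2 + beta*y/2) by field. rewrite exp_plus.
    pose proof (exp_ineq1_le (beta*y/2)).
    assert (beta*y/2 * (beta*y/2) <= exp (beta * y / 2) * exp (beta * y / 2)).
    { apply Rmult_le_compat; nra. }
    set (E := exp (beta * y / 2) * exp (beta * y / 2)) in *.
    assert (beta * E >= beta * (beta*y/2 * (beta*y/2))) by nra.
    assert (beta * (beta*y/2 * (beta*y/2)) = (beta^3 * y) * y / 4) by (simpl; field).
    nra. }
  destruct H. left; apply exp_increasing; auto. right; f_equal; exact H. Qed.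

Lemma ln_diff u d : 0 < u -> 0 < d -> ln (u + d) - ln u <= d / u.
Proof. intros. replace (u + d) with (u * (1 + d/u)) by (field; lra).
  assert (0 < d / u) by (apply Rdiv_lt_0_compat; lra).
  rewrite ln_mult; try lra.
  assert (ln (1 + d/u) <= d/u).
  { rewrite <- (ln_exp (d/u)) at 2. apply ln_le. lra. apply exp_ineq1_le. }
  lra. Qed.

Lemma iter_exp_lin x k : Nat.iter k exp x >= x + INR k.
Proof. induction k. simpl; lra. rewrite S_INR. simpl.
  pose proof (exp_ineq1_le (Nat.iter k exp x)). lra. Qed.

Lemma iter_exp_mono x K j : Nat.iter K exp x <= Nat.iter (K + j) exp x.
Proof. induction j. rewrite Nat.add_0_r; lra. rewrite Nat.add_succ_r. simpl.
  pose proof (exp_ineq1_le (Nat.iter (K+j) exp x)). lra. Qed.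

Theorem lemma4p7 (beta xi : R) (Phi : R -> R)
  (Hbeta : 0 < beta < / exp 1)
  (Hxi_pos : 0 < xi) (Hxi_fix : E_beta beta xi = xi) (Hxi_rep : 1 < beta * xi)
  (HPhi : is_Phi beta xi Phi) :
  forall x : R, 0 < x ->
    is_lim_seq
      (fun n : nat => sum_f_R0 (fun k : nat => eps Phi (Nat.iter (S k) exp x)) n)
      p_infty.
Proof.
  intros x Hx.
  destruct HPhi as [[r [aa [Hr [_ HFE]]]] [H0 Hd]].
  destruct Hbeta as [Hb _].
  set (lam := beta * xi).
  apply is_derive_Reals in Hd.
  destruct (Hd (1/2) ltac:(lra)) as [delta Hdel].
  assert (Hdp : 0 < delta) by apply cond_pos.
  assert (Pb : forall z, xi < z < xi + delta -> (z - xi)/2 < Phi z < 3/2 * (z - xi)).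
  { intros z Hz. specialize (Hdel (z - xi) ltac:(lra)).
    rewrite Rabs_right in Hdel by lra. specialize (Hdel ltac:(lra)).
    replace (xi + (z - xi)) with z in Hdel by ring. rewrite H0 in Hdel.
    apply Rabs_def2 in Hdel. destruct Hdel as [h1 h2].
    replace ((Phi z - 0) / (z - xi)) with (Phi z / (z - xi)) in * by (field; lra).
    assert (Phi z = Phi z / (z - xi) * (z - xi)) by (field; lra).
    split; nra. }
  set (h0 := Rmin (delta / (4 * lam)) (1 / (2 * beta))).
  assert (Hh0 : 0 < h0).
  { unfold h0. apply Rmin_glb_lt; apply Rdiv_lt_0_compat; unfold lam; nra. }
  assert (Hh1 : h0 <= delta / (4 * lam)) by apply Rmin_l.
  assert (Hh2 : h0 <= 1 / (2 * beta)) by apply Rmin_r.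
  set (a := xi + h0).
  assert (Ha : xi < a) by (unfold a; lra).
  assert (HEa : E_beta beta a < xi + delta).
  { unfold a, E_beta. replace (beta * (xi + h0)) with (beta*xi + beta*h0) by ring.
    rewrite exp_plus. unfold E_beta in Hxi_fix. rewrite Hxi_fix.
    set (u := beta * h0).
    assert (Hu1 : u <= 1/2).
    { unfold u. apply (Rmult_le_compat_l beta) in Hh2; [|lra].
      replace (beta * (1/(2*beta))) with (1/2) in Hh2 by (field; lra). lra. }
    assert (Hu2 : 2 * xi * u <= delta / 2).
    { unfold u. apply (Rmult_le_compat_l (2*lam)) in Hh1; [|unfold lam; lra].
      replace (2 * lam * (delta / (4 * lam))) with (delta/2) in Hh1 by (field; unfold lam; lra).
      unfold lam in Hh1. nra. }
    assert (Hu0 : 0 < u) by (unfold u; nra).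
    pose proof (exp_ineq1_le (-u)). rewrite exp_Ropp in H.
    assert (He : 0 < exp u) by apply exp_pos.
    assert (exp u * (1 - u) <= 1).
    { apply (Rmult_le_compat_l (exp u)) in H; [|lra].
      rewrite Rinv_r in H by lra. lra. }
    assert (exp u <= 2) by nra.
    assert (exp u - 1 <= 2 * u) by nra.
    nra. }
  assert (HaE : a < E_beta beta a).
  { pose proof (Eb_lin beta xi a Hxi_pos Hxi_fix). unfold lam in *. nra. }
  set (c := h0 / 2).
  set (M := 3/2 * delta).
  assert (Pw : forall z, a <= z <= E_beta beta a -> c < Phi z < M).
  { intros z Hz. destruct (Pb z ltac:(unfold a in *; lra)). unfold c, M, a in *. lra. }
  set (s := fun n => Nat.iter n (E_beta beta) a).
  destruct (INR_unbounded (1 / ((lam - 1) * c))) as [m0 Hm0].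
  assert (Hlc : 0 < (lam - 1) * c) by (unfold lam, c; nra).
  assert (Hm0' : INR m0 * ((lam - 1) * c) > 1).
  { apply (Rmult_gt_compat_r ((lam - 1) * c)) in Hm0; auto.
    unfold Rdiv in Hm0. rewrite Rmult_1_l, Rinv_l in Hm0 by lra. lra. }
  set (N := S m0).
  set (Y0 := 4 / beta^3).
  destruct (INR_unbounded (Rmax Y0 (s N) - x)) as [K HK].
  set (yK := Nat.iter K exp x).
  assert (HyK : Rmax Y0 (s N) <= yK).
  { pose proof (iter_exp_lin x K). unfold yK. lra. }
  assert (HyK1 : Y0 <= yK) by (eapply Rle_trans; [apply Rmax_l|apply HyK]).
  assert (HyK2 : s N <= yK) by (eapply Rle_trans; [apply Rmax_r|apply HyK]).
  assert (HsN : a <= s N).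
  { pose proof (s_lin beta xi a N Hxi_pos Hxi_fix Hxi_rep Ha). unfold s.
    assert (0 <= INR N) by apply pos_INR.
    assert (0 <= INR N * (beta * xi - 1) * (a - xi)) by (apply Rmult_le_pos; [apply Rmult_le_pos|]; lra).
    lra. }
  destruct (INR_unbounded ((yK - a) / ((lam - 1) * h0))) as [p Hp].
  assert (Hps : yK <= s (S p)).
  { pose proof (s_lin beta xi a p Hxi_pos Hxi_fix Hxi_rep Ha).
    pose proof (s_succ beta xi a p Hxi_pos Hxi_fix Hxi_rep Ha).
    assert (Hl0 : 0 < (lam - 1) * h0) by (unfold lam; nra).
    apply (Rmult_gt_compat_r ((lam - 1) * h0)) in Hp; auto.
    unfold Rdiv in Hp. rewrite Rmult_assoc, Rinv_l, Rmult_1_r in Hp by lra.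
    unfold s, lam in *. replace (a - xi) with h0 in H by (unfold a; ring).
    replace (INR p * (beta * xi - 1) * h0) with (INR p * ((beta * xi - 1) * h0)) in H by ring.
    lra. }
  assert (Hclaim : forall j, Nat.iter (K + j) exp x <= s (S (p + 2 * j))).
  { induction j.
    - replace (p + 2*0)%nat with p by lia. rewrite Nat.add_0_r. exact Hps.
    - rewrite Nat.add_succ_r. replace (p + 2 * S j)%nat with (S (S (p + 2 * j))) by lia.
      simpl (Nat.iter (S (K + j)) exp x).
      pose proof (iter_exp_mono x K j).
      eapply Rle_trans. apply (growth beta); auto. fold yK in H. unfold Y0 in HyK1. lra.
      unfold s. simpl. apply Eb_le; auto. apply Eb_le; auto. }
  set (L := ln lam).
  assert (HL : 0 < L). { unfold L. rewrite <- ln_1. apply ln_increasing; unfold lam; lra. }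
  set (C := INR p * L + Rabs (ln M) + 1).
  assert (HC : 0 < C).
  { unfold C. pose proof (pos_INR p). pose proof (Rabs_pos (ln M)). nra. }
  assert (HB : forall j, / (C + 2 * L * INR j) <= eps Phi (Nat.iter (K + j) exp x)).
  { intro j. set (y := Nat.iter (K + j) exp x).
    assert (Hy1 : yK <= y) by apply iter_exp_mono.
    assert (Hay : a <= y) by lra.
    destruct (decomp beta a Hb (p + 2 * j) y (conj Hay (Hclaim j))) as [m [z [Hm [Hz Hyz]]]].
    assert (HPy : Phi y = lam ^ m * Phi z).
    { rewrite Hyz. apply (iter_FE beta xi r); auto. lra. }
    destruct (Pw z Hz) as [Pz1 Pz2].
    assert (HmN : (N <= S m)%nat).
    { apply (m_lower beta xi a N m z); auto; try lra. rewrite <- Hyz. change (s N <= y). lra. }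
    assert (Hlm : lam ^ m >= 1 + INR m * (lam - 1)) by (apply bern; unfold lam; lra).
    assert (Hm0m : INR m0 <= INR m) by (apply le_INR; unfold N in HmN; lia).
    assert (Hpy1 : 1 < Phi y).
    { rewrite HPy. assert (0 < lam ^ m) by (apply pow_lt; unfold lam; lra).
      assert (lam ^ m * Phi z >= lam ^ m * c) by nra.
      assert (Hc0 : 0 < c) by (unfold c; lra).
      assert (lam ^ m * c >= (1 + INR m * (lam - 1)) * c) by nra.
      assert (INR m * ((lam - 1) * c) >= INR m0 * ((lam - 1) * c)) by nra.
      nra. }
    assert (Hpy2 : Phi y <= lam ^ (p + 2 * j) * M).
    { rewrite HPy. assert (lam ^ m <= lam ^ (p + 2*j)) by (apply Rle_pow; [unfold lam; lra|lia]).
      assert (0 < lam ^ m) by (apply pow_lt; unfold lam; lra).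
      assert (0 < M) by (unfold M; lra).
      assert (lam ^ m * Phi z <= lam ^ m * M) by (apply Rmult_le_compat_l; lra).
      assert (lam ^ m * M <= lam ^ (p + 2*j) * M) by (apply Rmult_le_compat_r; lra).
      lra. }
    assert (HlnP : 0 < ln (Phi y)) by (rewrite <- ln_1; apply ln_increasing; lra).
    assert (Hln2 : ln (Phi y) <= C + 2 * L * INR j).
    { assert (0 < M) by (unfold M; lra).
      assert (0 < lam ^ (p + 2*j)) by (apply pow_lt; unfold lam; lra).
      pose proof (ln_le (Phi y) _ ltac:(lra) Hpy2).
      rewrite ln_mult, ln_pow in H2 by (try lra; unfold lam; lra). rewrite plus_INR, mult_INR in H2.
      simpl (INR 2) in H2. pose proof (Rle_abs (ln M)). fold L in H2. unfold C. nra. }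
    unfold eps. apply Rinv_le_contravar; auto. }
  set (Ssum := fun n : nat => sum_f_R0 (fun k : nat => eps Phi (Nat.iter (S k) exp x)) n).
  set (F := fun n : nat => ln (C + 2 * L * (INR n + 2)) / (2 * L)).
  assert (HS : forall n, Ssum K - F 0%nat + F n <= Ssum (n + K)%nat).
  { induction n. simpl (0 + K)%nat. lra.
    change (Ssum (S n + K)%nat) with (Ssum (n + K)%nat + eps Phi (Nat.iter (S (S (n + K))) exp x)).
    replace (S (S (n + K))) with (K + (n + 2))%nat by lia.
    pose proof (HB (n + 2)%nat).
    assert (Hi2 : INR (n + 2) = INR n + 2) by (rewrite plus_INR; simpl; ring).
    rewrite Hi2 in H.
    assert (F (S n) - F n <= / (C + 2 * L * (INR n + 2))).
    { unfold F. rewrite S_INR.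
      pose proof (pos_INR n).
      pose proof (ln_diff (C + 2 * L * (INR n + 2)) (2 * L) ltac:(nra) ltac:(lra)).
      replace (C + 2 * L * (INR n + 1 + 2)) with (C + 2 * L * (INR n + 2) + 2 * L) by ring.
      replace (ln (C + 2 * L * (INR n + 2) + 2 * L) / (2 * L) - ln (C + 2 * L * (INR n + 2)) / (2 * L))
        with ((ln (C + 2 * L * (INR n + 2) + 2 * L) - ln (C + 2 * L * (INR n + 2))) / (2 * L)) by (field; lra).
      replace (/ (C + 2 * L * (INR n + 2))) with ((2 * L) / (C + 2 * L * (INR n + 2)) / (2 * L)) by (field; nra).
      apply Rmult_le_compat_r; auto. left; apply Rinv_0_lt_compat; lra. }
    lra. }
  apply (is_lim_seq_incr_n _ K).
  apply (is_lim_seq_le_p_loc (fun n => Ssum K - F 0%nat + F n)).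
  - exists 0%nat. intros n _. apply HS.
  - apply is_lim_seq_spec. intro Mx.
    set (M' := Mx - Ssum K + F 0%nat).
    destruct (INR_unbounded (exp (2 * L * M') / (2 * L))) as [N1 HN1].
    exists N1. intros n Hn.
    assert (INR N1 <= INR n) by (apply le_INR; lia).
    apply (Rmult_gt_compat_r (2 * L)) in HN1; [|lra].
    replace (exp (2 * L * M') / (2 * L) * (2 * L)) with (exp (2 * L * M')) in HN1 by (field; lra).
    assert (exp (2 * L * M') < C + 2 * L * (INR n + 2)) by nra.
    assert (2 * L * M' < ln (C + 2 * L * (INR n + 2))).
    { rewrite <- (ln_exp (2 * L * M')). apply ln_increasing; auto. apply exp_pos. }
    assert (M' < F n).
    { unfold F. apply (Rmult_lt_reg_r (2 * L)); [lra|].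
      replace (ln (C + 2 * L * (INR n + 2)) / (2 * L) * (2 * L)) with (ln (C + 2 * L * (INR n + 2))) by (field; lra).
      lra. }
    unfold M' in H3. lra.
Qed.
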